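(* Let $\mathbb{A}$, its multiplication, the decomposition $A_3=C\oplus L$, the complex $\mathbb{B}=\mathbb{B}(\mathbb{A},C)$ and the ideal $J_C$ be as in the context. Suppose that $\operatorname{grade}J_C\ge 4$. Then $\mathbb{B}$ is acyclic. Moreover, either $\operatorname{grade}J_C=4$ or $J_C=R$.
   Context: Let $R$ be a commutative Noetherian ring and let $p\ge 1$, $q\ge 3$ be integers. Let $\mathbb{A}\colon 0\to A_3\xrightarrow{d_3}A_2\xrightarrow{d_2}A_1\xrightarrow{d_1}A_0=R$ be a complex of finitely generated free $R$-modules with $\operatorname{rank}A_1=p+2$, $\operatorname{rank}A_2=p+q$, $\operatorname{rank}A_3=q-1$, which is acyclic and whose dual complex $\mathbb{A}^*$ is also acyclic (equivalently, $H_0(\mathbb{A})=R/I$ with $I=\operatorname{im}d_1$ either a grade $3$ perfect ideal or the unit ideal). Fix a differential graded algebra structure on $\mathbb{A}$: $R$-bilinear products $A_1\times A_1\to A_2$ (alternating: $e\cdot e=0$, $e\cdot e'=-e'\cdot e$) and $A_1\times A_2\to A_3$ satisfying the Leibniz rules $d_2(e\cdot e')=d_1(e)e'-d_1(e')e$ and $d_3(e\cdot f)=d_1(e)f+d_2(f)\cdot e$ for $e,e'\in A_1$, $f\in A_2$. Fix a decomposition $A_3=C\oplus L$ with $C$ free of rank $q-2$ and $L$ free of rank $1$; let $\eta\colon A_3\to L$ be the projection and $\iota\colon C\to A_3$ the inclusion. Define the sequence $\mathbb{B}=\mathbb{B}(\mathbb{A},C)\colon 0\to C\xrightarrow{\delta_4}A_2\xrightarrow{\delta_3}\operatorname{Hom}(A_1,L)\oplus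 A_1\xrightarrow{\delta_2}\operatorname{Hom}(A_2,L)\xrightarrow{\delta_1}\operatorname{Hom}(C,L)$ by $\delta_4=d_3\circ\iota$; $\delta_3(f)=\big(e\mapsto \eta(e\cdot f),\ d_2(f)\big)$; $\delta_2(\varphi,e)=\big(f\mapsto \varphi(d_2f)+\eta(e\cdot f)\big)$; $\delta_1(\psi)=\psi\circ d_3\circ\iota$. (Up to the twist by $L$, $\delta_2=\delta_3^*$ and $\delta_1=\delta_4^*$.) Let $J_C=I_{q-2}(\delta_4)$ denote the ideal generated by the $(q-2)\times(q-2)$ minors of $\delta_4$. The grade of an ideal $J$ is $\inf\{i:\operatorname{Ext}^i_R(R/J,R)\neq 0\}$ (equal to $\infty$ for $J=R$). *)

(* Defs.v *)
(* Free modules of finite rank r are column vectors 'cV[R]_r,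
   R-linear maps between them are matrices acting by left multiplication. *)
From HB Require Import structures.
From mathcomp Require Import all_boot all_order all_algebra.
Set Implicit Arguments. Unset Strict Implicit. Unset Printing Implicit Defensive.
Import GRing.Theory.
Local Open Scope ring_scope.

Section Defs.
Variable R : comNzRingType.

Definition is_ideal (I : R -> Prop) : Prop :=
  I 0 /\ (forall x y, I x -> I y -> I (x + y)) /\ (forall r x, I x -> I (r * x)).

Definition noetherian : Prop :=
  forall I : nat -> R -> Prop, (forall n, is_ideal (I n)) ->
    (forall n x, I n x -> I n.+1 x) ->
    exists N, forall n x, (N <= n)%N -> I n x -> I N x.

(* the R-bilinear map R^a x R^b -> R^c with structure constants m i j
   (m i j = product of the i-th and j-th basis vectors) *)
Definition bil a b c (m : 'I_a -> 'I_b -> 'cV[R]_c) (u : 'cV[R]_a) (v : 'cV[R]_b)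
  : 'cV[R]_c := \sum_i \sum_j (u i 0 * v j 0) *: m i j.

(* the ideal I_k(M) generated by the k x k minors of M : 'M_(m, k)
   (i.e. of all maximal minors; rowsub f with f non injective has det 0) *)
Definition minors_ideal m k (M : 'M[R]_(m, k)) (x : R) : Prop :=
  exists c : {ffun 'I_k -> 'I_m} -> R,
    x = \sum_(f : {ffun 'I_k -> 'I_m}) c f * \det (rowsub f M).

(* grade J >= g, with grade J = inf { i : Ext^i_R(R/J, R) <> 0 }.
   Ext is computed from a free resolution of R/J by finite free modules
   F_0 = R^1 <-d0- F_1 = R^(n 0) <-(d 0)- F_2 = R^(n 1) <-(d 1)- ...
   (such a resolution exists since R is Noetherian; Ext does not depend on it).
   Dual modules Hom(F_i,R) are row vectors, dual maps are right multiplication.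
   The condition says Ext^i(R/J,R) = 0 for all i < g. *)
Definition grade_ge (J : R -> Prop) (g : nat) : Prop :=
  exists (n : nat -> nat) (d0 : 'M[R]_(1, n 0%N))
         (d : forall k, 'M[R]_(n k, n k.+1)),
    (forall x, J x <-> exists w : 'cV[R]_(n 0%N), (d0 *m w) 0 0 = x) /\
    d0 *m d 0%N = 0 /\ (forall k, d k *m d k.+1 = 0) /\
    (forall v : 'cV[R]_(n 0%N), d0 *m v = 0 -> exists w, v = d 0%N *m w) /\
    (forall k (v : 'cV[R]_(n k.+1)), d k *m v = 0 -> exists w, v = d k.+1 *m w) /\
    ((0 < g)%N -> forall x : 'rV[R]_1, x *m d0 = 0 -> x = 0) /\
    ((1 < g)%N -> forall y : 'rV[R]_(n 0%N), y *m d 0%N = 0 ->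
                   exists x : 'rV[R]_1, y = x *m d0) /\
    (forall k, (k.+2 < g)%N -> forall y : 'rV[R]_(n k.+1), y *m d k.+1 = 0 ->
                   exists x : 'rV[R]_(n k), y = x *m d k).

End Defs.

(* Main.v *)
Require Import Defs.
From HB Require Import structures.
From mathcomp Require Import all_boot all_order all_algebra.
Import GRing.Theory.
From mathcomp Require Import fingroup perm.
From Stdlib Require Import Classical.
Local Open Scope ring_scope.

Section Gen.
Set Implicit Arguments. Unset Strict Implicit.
Variable K : comNzRingType.


Lemma cauchy_binet k m (A : 'M[K]_(k, m)) (B : 'M[K]_(m, k)) :
  \det (A *m B) = \sum_(f : ('I_m ^ k)%type) (\prod_i A i (f i)) * \det (rowsub f B).
Proof.
rewrite /determinant.
transitivity (\sum_(s : 'S_k) \sum_(f : ('I_m ^ k)%type)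
   (-1) ^+ s * ((\prod_i A i (f i)) * \prod_i B (f i) (s i))).
  apply: eq_bigr => s _; rewrite -big_distrr /=; congr (_ * _).
  rewrite (eq_bigr (fun i => \sum_j A i j * B j (s i))); last by move=> i _; rewrite mxE.
  rewrite bigA_distr_bigA /=; apply: eq_bigr => f _; by rewrite big_split.
rewrite exchange_big /=; apply: eq_bigr => f _.
rewrite big_distrr /=; apply: eq_bigr => s _.
rewrite mulrCA; congr (_ * (_ * _)); apply: eq_bigr => i _; by rewrite mxE.
Qed.

Lemma lift_rows a b c m (A : 'M[K]_(a, b)) (B : 'M[K]_(c, a)) :
  (forall y : 'rV[K]_a, y *m A = 0 -> exists x : 'rV[K]_c, y = x *m B) ->
  forall Y : 'M[K]_(m, a), Y *m A = 0 -> exists X : 'M[K]_(m, c), Y = X *m B.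
Proof.
move=> H Y HY.
have: forall i : 'I_m, exists x : 'rV[K]_c, row i Y = x *m B.
  move=> i; apply: H; by rewrite -row_mul HY row0.
case/fin_all_exists => x Hx.
exists (\matrix_(i, j) x i 0 j).
apply/row_matrixP => i; rewrite row_mul Hx; congr (_ *m _).
by apply/rowP => j; rewrite !mxE.
Qed.

Lemma col_matrixP' a b (A B : 'M[K]_(a, b)) : (forall j, col j A = col j B) -> A = B.
Proof.
move=> H; apply/matrixP => i j; move: (H j) => /colP /(_ i); by rewrite !mxE.
Qed.

Lemma col_mulmx a b m (A : 'M[K]_(a, b)) (V : 'M[K]_(b, m)) j :
  col j (A *m V) = A *m col j V.
Proof. by rewrite !colE mulmxA. Qed.

Lemma lift_cols a b c m (A : 'M[K]_(a, b)) (B : 'M[K]_(b, c)) :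
  (forall v : 'cV[K]_b, A *m v = 0 -> exists w : 'cV[K]_c, v = B *m w) ->
  forall V : 'M[K]_(b, m), A *m V = 0 -> exists W : 'M[K]_(c, m), V = B *m W.
Proof.
move=> H V HV.
have: forall j : 'I_m, exists w : 'cV[K]_c, col j V = B *m w.
  move=> j; apply: H; by rewrite -col_mulmx HV col0.
case/fin_all_exists => w Hw.
exists (\matrix_(i, j) w j i 0).
apply: col_matrixP' => j; rewrite col_mulmx Hw; congr (_ *m _).
by apply/colP => i; rewrite !mxE.
Qed.

Lemma inj_cols a b m (A : 'M[K]_(a, b)) :
  (forall v : 'cV[K]_b, A *m v = 0 -> v = 0) ->
  forall V : 'M[K]_(b, m), A *m V = 0 -> V = 0.
Proof.
move=> H V HV; apply: col_matrixP' => j; rewrite col0; apply: H.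
by rewrite -col_mulmx HV col0.
Qed.

Lemma inj_rows b m (A : 'M[K]_(1, b)) :
  (forall x : 'rV[K]_1, x *m A = 0 -> x = 0) ->
  forall Y : 'M[K]_(m, 1), Y *m A = 0 -> Y = 0.
Proof.
move=> H Y HY; apply/row_matrixP => j; rewrite row0; apply: H.
by rewrite -row_mul HY row0.
Qed.

Lemma chase4 b0 b1 b2 b3 b4 (e1 : 'M[K]_(b0, b1)) (e2 : 'M[K]_(b1, b2))
  (e3 : 'M[K]_(b2, b3)) (e4 : 'M[K]_(b3, b4))
  (c1 : e1 *m e2 = 0) (c2 : e2 *m e3 = 0) (c3 : e3 *m e4 = 0)
  (x1 : forall v : 'cV[K]_b1, e1 *m v = 0 -> exists w, v = e2 *m w)
  (x2 : forall v : 'cV[K]_b2, e2 *m v = 0 -> exists w, v = e3 *m w)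
  (x3 : forall v : 'cV[K]_b3, e3 *m v = 0 -> exists w, v = e4 *m w)
  (x4 : forall v : 'cV[K]_b4, e4 *m v = 0 -> v = 0)
  (n : nat -> nat) (d0 : 'M[K]_(1, n 0%N)) (d : forall k, 'M[K]_(n k, n k.+1))
  (E0 : forall x : 'rV[K]_1, x *m d0 = 0 -> x = 0)
  (E1 : forall y : 'rV[K]_(n 0%N), y *m d 0%N = 0 -> exists x : 'rV[K]_1, y = x *m d0)
  (E2 : forall y : 'rV[K]_(n 1%N), y *m d 1%N = 0 -> exists x : 'rV[K]_(n 0%N), y = x *m d 0%N)
  (E3 : forall y : 'rV[K]_(n 2%N), y *m d 2%N = 0 -> exists x : 'rV[K]_(n 1%N), y = x *m d 1%N)
  (E4 : forall Y : 'M[K]_(b4, n 3%N), Y *m d 3%N = 0 -> exists X : 'M[K]_(b4, n 2%N), Y = X *m d 2%N)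
  (h0 : d0 *m d 0%N = 0) (hd : forall k, d k *m d k.+1 = 0)
  (t : 'cV[K]_b0) (W0 : 'M[K]_(b1, n 0%N)) :
  t *m d0 = e1 *m W0 -> exists X, t = e1 *m X.
Proof.
move=> HW0.
have [W1 HW1] : exists W1, W0 *m d 0%N = e2 *m W1.
  apply: (lift_cols x1); by rewrite mulmxA -HW0 -mulmxA h0 mulmx0.
have [W2 HW2] : exists W2, W1 *m d 1%N = e3 *m W2.
  apply: (lift_cols x2); by rewrite mulmxA -HW1 -mulmxA hd mulmx0.
have [W3 HW3] : exists W3, W2 *m d 2%N = e4 *m W3.
  apply: (lift_cols x3); by rewrite mulmxA -HW2 -mulmxA hd mulmx0.
have HW3' : W3 *m d 3%N = 0.
  apply: (inj_cols x4); by rewrite mulmxA -HW3 -mulmxA hd mulmx0.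
have [X3 HX3] := E4 _ HW3'.
have [X2 HX2] : exists X2, W2 - e4 *m X3 = X2 *m d 1%N.
  apply: (lift_rows E3); by rewrite mulmxBl HW3 HX3 -!mulmxA subrr.
have [X1 HX1] : exists X1, W1 - e3 *m X2 = X1 *m d 0%N.
  apply: (lift_rows E2).
  by rewrite mulmxBl HW2 -mulmxA -HX2 mulmxBr mulmxA c3 mul0mx subr0 subrr.
have [X0 HX0] : exists X0, W0 - e2 *m X1 = X0 *m d0.
  apply: (lift_rows E1).
  by rewrite mulmxBl HW1 -mulmxA -HX1 mulmxBr mulmxA c2 mul0mx subr0 subrr.
exists X0.
apply/eqP; rewrite -subr_eq0; apply/eqP; apply: (inj_rows E0).
rewrite mulmxBl HW0 -mulmxA -HX0 mulmxBr mulmxA.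
by rewrite c1 mul0mx subr0 subrr.
Qed.

Lemma tr11 (x : 'M[K]_1) : x^T = x.
Proof. by apply/matrixP => i j; rewrite !ord1 mxE. Qed.

Lemma mx11_mul m (x : 'M[K]_1) (A : 'M[K]_(1, m)) : x *m A = x 0 0 *: A.
Proof. by rewrite {1}[x]mx11_scalar mul_scalar_mx. Qed.

Lemma dl k l (X : 'M[K]_(k, l)) i j : ((delta_mx 0 i : 'M[K]_(1, k)) *m X) 0 j = X i j.
Proof. by rewrite -rowE mxE. Qed.

Lemma dr k l (X : 'M[K]_(k, l)) i j : (X *m (delta_mx j 0 : 'M[K]_(l, 1))) i 0 = X i j.
Proof. by rewrite -colE mxE. Qed.
End Gen.


Theorem mainTheorem2
  (R : comNzRingType) (HR : noetherian R) (p q : nat)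
  (hp : (1 <= p)%N) (hq : (3 <= q)%N)
  (* the complex A : 0 -> A3 -> A2 -> A1 -> A0 = R *)
  (d1 : 'M[R]_(1, p + 2)) (d2 : 'M[R]_(p + 2, p + q)) (d3 : 'M[R]_(p + q, q - 1))
  (hd12 : d1 *m d2 = 0) (hd23 : d2 *m d3 = 0)
  (* A acyclic *)
  (hex1 : forall v : 'cV[R]_(p + 2), d1 *m v = 0 -> exists w, v = d2 *m w)
  (hex2 : forall v : 'cV[R]_(p + q), d2 *m v = 0 -> exists w, v = d3 *m w)
  (hex3 : forall v : 'cV[R]_(q - 1), d3 *m v = 0 -> v = 0)
  (* A^* acyclic *)
  (hdex0 : forall x : 'rV[R]_1, x *m d1 = 0 -> x = 0)
  (hdex1 : forall y : 'rV[R]_(p + 2), y *m d2 = 0 -> exists x, y = x *m d1)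
  (hdex2 : forall z : 'rV[R]_(p + q), z *m d3 = 0 -> exists y, z = y *m d2)
  (* DG algebra structure: structure constants of A1 x A1 -> A2, A1 x A2 -> A3 *)
  (m1 : 'I_(p + 2) -> 'I_(p + 2) -> 'cV[R]_(p + q))
  (m2 : 'I_(p + 2) -> 'I_(p + q) -> 'cV[R]_(q - 1))
  (halt : forall e : 'cV[R]_(p + 2), bil m1 e e = 0)
  (hanti : forall e e' : 'cV[R]_(p + 2), bil m1 e e' = - bil m1 e' e)
  (hleib1 : forall e e' : 'cV[R]_(p + 2),
      d2 *m bil m1 e e' = (d1 *m e) 0 0 *: e' - (d1 *m e') 0 0 *: e)
  (hleib2 : forall (e : 'cV[R]_(p + 2)) (f : 'cV[R]_(p + q)),
      d3 *m bil m2 e f = (d1 *m e) 0 0 *: f + bil m1 (d2 *m f) e)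
  (* decomposition A3 = C (+) L: iota = inclusion of C (basis of C),
     ell = basis of L, pi / eta = the two projections (eta : A3 -> L ~ R) *)
  (iota : 'M[R]_(q - 1, q - 2)) (ell : 'cV[R]_(q - 1))
  (pi : 'M[R]_(q - 2, q - 1)) (eta : 'rV[R]_(q - 1))
  (hpi : pi *m iota = 1%:M) (heta : eta *m ell = 1%:M)
  (hpe : pi *m ell = 0) (hei : eta *m iota = 0)
  (hsum : iota *m pi + ell *m eta = 1%:M) :
  let J := minors_ideal (d3 *m iota) in
  (* the maps of B, with Hom(A1,L) ~ R^(p+2), Hom(A2,L) ~ R^(p+q),
     Hom(C,L) ~ R^(q-2) via the basis ell of L *)
  let delta4 := fun c : 'cV[R]_(q - 2) => d3 *m iota *m c in
  let delta3 := fun f : 'cV[R]_(p + q) =>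
      (\col_i (eta *m bil m2 (delta_mx i 0) f) 0 0, d2 *m f) in
  let delta2 := fun (phi e : 'cV[R]_(p + 2)) =>
      \col_j ((phi^T *m (d2 *m (delta_mx j 0 : 'cV[R]_(p + q)))) 0 0
              + (eta *m bil m2 e (delta_mx j 0 : 'cV[R]_(p + q))) 0 0) : 'cV[R]_(p + q) in
  let delta1 := fun psi : 'cV[R]_(p + q) =>
      \col_k (psi^T *m (d3 *m iota *m (delta_mx k 0 : 'cV[R]_(q - 2)))) 0 0 : 'cV[R]_(q - 2) in
  grade_ge J 4 ->
  ( (* B is a complex *)
    (forall c, delta3 (delta4 c) = (0, 0)) /\
    (forall f, delta2 (delta3 f).1 (delta3 f).2 = 0) /\
    (forall phi e, delta1 (delta2 phi e) = 0) /\
    (* B is exact (acyclic) *)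
    (forall c, delta4 c = 0 -> c = 0) /\
    (forall f, delta3 f = (0, 0) -> exists c, f = delta4 c) /\
    (forall phi e, delta2 phi e = 0 -> exists f, delta3 f = (phi, e)) /\
    (forall psi, delta1 psi = 0 -> exists phi e, psi = delta2 phi e) ) /\
  ((forall x, J x) \/ ~ grade_ge J 5).

Proof.
move=> J delta4 delta3 delta2 delta1 HJ4.
pose Gm : 'M[R]_(p + 2, p + q) := \matrix_(i, j) (eta *m m2 i j) 0 0.
have bil0l : forall e : 'cV[R]_(p + 2), bil m1 0 e = 0.
  move=> e; rewrite /bil big1 // => i _; rewrite big1 // => j _.
  by rewrite mxE mul0r scale0r.
have etabil : forall e f, eta *m bil m2 e f = e^T *m Gm *m f.
  move=> e f; apply/matrixP => a b; rewrite !ord1.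
  rewrite /bil mulmx_sumr summxE !mxE.
  under eq_bigr => i _ do rewrite mulmx_sumr summxE.
  rewrite exchange_big /=; apply: eq_bigr => j _.
  rewrite !mxE big_distrl /=; apply: eq_bigr => i _.
  by rewrite -scalemxAr !mxE mulrAC.
have F1 : forall e a, bil m2 e (d3 *m a) = (d1 *m e) 0 0 *: a.
  move=> e a; apply/eqP; rewrite -subr_eq0; apply/eqP; apply: hex3.
  by rewrite mulmxBr hleib2 mulmxA hd23 mul0mx bil0l addr0 -scalemxAr subrr.
have F2 : forall f g, bil m2 (d2 *m f) g + bil m2 (d2 *m g) f = 0.
  move=> f g; apply: hex3.
  rewrite mulmxDr !hleib2 !mulmxA hd12 !mul0mx ?mxE ?scale0r ?add0r.
  by rewrite (hanti (d2 *m g)) addNr.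
have E : forall k l (X : 'M[R]_(k, l)) i j,
    X i j = ((delta_mx 0 i : 'M[R]_(1, k)) *m X *m (delta_mx j 0 : 'M[R]_(l, 1))) 0 0.
  by move=> k l X i j; rewrite -mulmxA dl dr.
have E' : forall k (v : 'cV[R]_k) j, v j 0 = ((delta_mx 0 j : 'M[R]_(1, k)) *m v) 0 0.
  by move=> k v j; rewrite dl.
have K1 : Gm *m d3 = d1^T *m eta.
  apply/matrixP => i c; rewrite [LHS]E -!mulmxA mulmxA -trmx_delta -etabil F1.
  rewrite -scalemxAr mxE dr dr [RHS]mxE big_ord1 !mxE.
  done.
have K2 : forall f : 'cV[R]_(p + q), d2^T *m (Gm *m f) + Gm^T *m (d2 *m f) = 0.
  move=> f; apply/matrixP => j k; rewrite ord1 [LHS]E' mulmxDr [RHS]mxE.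
  have T1 : (delta_mx 0 j : 'M[R]_(1, p + q)) *m (d2^T *m (Gm *m f))
      = (d2 *m delta_mx j 0)^T *m Gm *m f.
    by rewrite trmx_mul trmx_delta !mulmxA.
  have T2 : (delta_mx 0 j : 'M[R]_(1, p + q)) *m (Gm^T *m (d2 *m f))
      = (d2 *m f)^T *m Gm *m delta_mx j 0.
    by rewrite -[LHS]tr11 !trmx_mul trmxK trmx_delta ?mulmxA.
  by rewrite T1 T2 -!etabil -mulmxDr F2 mulmx0 mxE.
have TT : forall k l (A : 'M[R]_(k, l)) (v : 'cV[R]_k) j,
    (A^T *m v) j 0 = (v^T *m A) 0 j.
  by move=> k l A v j; rewrite !mxE; apply: eq_bigr => i _; rewrite !mxE mulrC.
have D3 : forall f, delta3 f = (Gm *m f, d2 *m f).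
  move=> f; rewrite /delta3; congr (_, _); apply/matrixP => i k.
  by rewrite ord1 [LHS]mxE etabil trmx_delta -mulmxA dl.
have D2 : forall phi e, delta2 phi e = d2^T *m phi + Gm^T *m e.
  move=> phi e; rewrite /delta2; apply/matrixP => j k.
  by rewrite ord1 [LHS]mxE etabil !mulmxA !dr [RHS]mxE !TT.
have D1 : forall psi, delta1 psi = (d3 *m iota)^T *m psi.
  move=> psi; rewrite /delta1; apply/matrixP => j k.
  by rewrite ord1 [LHS]mxE !mulmxA dr TT mulmxA.
have GM0 : Gm *m (d3 *m iota) = 0 by rewrite mulmxA K1 -mulmxA hei mulmx0.
have d2M0 : d2 *m (d3 *m iota) = 0 by rewrite mulmxA hd23 mul0mx.
have hd3 : d3 = d3 *m iota *m pi + d3 *m ell *m eta.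
  by rewrite -!mulmxA -mulmxDr hsum mulmx1.
have X4 : forall c : 'cV[R]_(q - 2), d3 *m iota *m c = 0 -> c = 0.
  move=> c H; have H' : iota *m c = 0 by apply: hex3; rewrite mulmxA.
  by rewrite -[c]mul1mx -hpi -mulmxA H' mulmx0.
have X3 : forall f : 'cV[R]_(p + q), Gm *m f = 0 -> d2 *m f = 0 ->
    exists c, f = d3 *m iota *m c.
  move=> f Hg Hd; have [a Ha] := hex2 f Hd.
  have Hea : eta *m a = 0.
    apply: hdex0.
    have : d1^T *m (eta *m a) = 0 by rewrite mulmxA -K1 -mulmxA -Ha Hg.
    by move/(congr1 trmx); rewrite trmx_mul trmxK tr11 trmx0.
  have Ea : a = iota *m (pi *m a) + ell *m (eta *m a).
    by rewrite !mulmxA -mulmxDl hsum mul1mx.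
  by exists (pi *m a); rewrite Ha {1}Ea Hea mulmx0 addr0 mulmxA.
have X2 : forall phi e : 'cV[R]_(p + 2), d2^T *m phi + Gm^T *m e = 0 ->
    exists f, Gm *m f = phi /\ d2 *m f = e.
  move=> phi e H.
  have He : d1 *m e = 0.
    have : (d3 *m ell)^T *m (d2^T *m phi + Gm^T *m e) = 0 by rewrite H mulmx0.
    rewrite mulmxDr !mulmxA -!trmx_mul !mulmxA hd23 !mul0mx trmx0 mul0mx add0r.
    by rewrite K1 -(mulmxA d1^T) heta mulmx1 trmxK.
  have [f0 Hf0] := hex1 e He.
  pose phi' := phi - Gm *m f0.
  have Hp : phi'^T *m d2 = 0.
    have K' : d2^T *m (Gm *m f0) = - (Gm^T *m e).
      by apply/eqP; rewrite -addr_eq0 Hf0 K2.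
    have : d2^T *m phi' = 0 by rewrite /phi' mulmxBr K' opprK H.
    by move/(congr1 trmx); rewrite trmx_mul trmxK trmx0.
  have [x Hx] := hdex1 _ Hp.
  exists (f0 + d3 *m ell *m x); split.
    rewrite mulmxDr !mulmxA K1 -(mulmxA d1^T) heta mulmx1.
    have : phi' = d1^T *m x by rewrite -[phi']trmxK Hx trmx_mul tr11.
    by rewrite /phi' => /eqP; rewrite subr_eq => /eqP ->; rewrite addrC.
  by rewrite mulmxDr -Hf0 !mulmxA hd23 !mul0mx addr0.
have Ann : forall (s : R) (H : 'M[R]_(q - 1, p + q)), H *m d3 = s%:M ->
    exists k : 'cV[R]_(p + 2), d1 *m k = s%:M.
  move=> s H HH.
  have [K2m HK2] : exists K2m : 'M[R]_(p + q, p + 2), d3 *m H - s%:M = K2m *m d2.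
    apply: (lift_rows hdex2).
    by rewrite mulmxBl -mulmxA HH mul_mx_scalar mul_scalar_mx subrr.
  have [K1m HK1] : exists K1m : 'M[R]_(p + 2, 1), d2 *m K2m + s%:M = K1m *m d1.
    apply: (lift_rows hdex1).
    rewrite mulmxDl -mulmxA -HK2 mulmxBr mulmxA hd23 mul0mx.
    by rewrite mul_mx_scalar mul_scalar_mx sub0r addNr.
  exists K1m; apply/eqP; rewrite -subr_eq0; apply/eqP; apply: (inj_rows hdex0).
  rewrite mulmxBl -mulmxA -HK1 mulmxDr mulmxA hd12 mul0mx add0r.
  by rewrite mul_mx_scalar mul_scalar_mx subrr.
have X1 : forall psi : 'cV[R]_(p + q), (d3 *m iota)^T *m psi = 0 ->
    exists phi e, psi = d2^T *m phi + Gm^T *m e.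
  move=> psi Hpsi.
  pose u := psi^T.
  have Hu : u *m d3 *m iota = 0.
    by have := congr1 trmx Hpsi; rewrite trmx_mul trmxK trmx0 mulmxA.
  pose tm := u *m d3 *m ell.
  have Hud3 : u *m d3 = tm *m eta.
    by rewrite {1}hd3 mulmxDr !mulmxA Hu mul0mx add0r.
  have Minor : forall f : {ffun 'I_(q - 2) -> 'I_(p + q)},
      exists H : 'M[R]_(q - 1, p + q),
        H *m d3 = (\det (rowsub f (d3 *m iota)) * tm 0 0)%:M.
    move=> f; set Mf := rowsub f (d3 *m iota); set D := \det Mf; set ts := tm 0 0.
    pose A := \adj Mf *m rowsub f (1%:M : 'M[R]_(p + q)).
    have AM : A *m (d3 *m iota) = D%:M by rewrite /A -mulmxA -rowsubE mul_adj_mx.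
    have Ad3 : A *m d3 = D *: pi + A *m (d3 *m ell) *m eta.
      by rewrite {1}hd3 mulmxDr !mulmxA -(mulmxA A d3 iota) AM mul_scalar_mx.
    have Hud3' : u *m d3 = ts *: eta by rewrite Hud3 mx11_mul.
    have L1 : (ts *: A - A *m (d3 *m ell) *m u) *m d3 = (ts * D) *: pi.
      rewrite mulmxBl -scalemxAl -[A *m (d3 *m ell) *m u *m d3]mulmxA Hud3' Ad3.
      by rewrite -scalemxAr scalerDr addrK scalerA.
    exists (iota *m (ts *: A - A *m (d3 *m ell) *m u) + D *: (ell *m u)).
    rewrite mulmxDl -mulmxA L1 -scalemxAl -mulmxA Hud3' -!scalemxAr scalerA.
    by rewrite (mulrC ts) -scalerDr hsum scale_scalar_mx mulr1.
  have JI : forall x, J x -> exists k : 'cV[R]_(p + 2), d1 *m k = (x * tm 0 0)%:M.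
    move=> x; rewrite /J /minors_ideal => -[c ->].
    have : forall f : {ffun 'I_(q - 2) -> 'I_(p + q)}, exists k : 'cV[R]_(p + 2),
        d1 *m k = (\det (rowsub f (d3 *m iota)) * tm 0 0)%:M.
      by move=> f; have [H HH] := Minor f; exact: Ann _ _ HH.
    case/fin_all_exists => kf Hkf.
    exists (\sum_f c f *: kf f).
    apply/matrixP => a b; rewrite !ord1 mulmx_sumr summxE [RHS]mxE.
    rewrite eqxx mulr1n.
    rewrite big_distrl /=; apply: eq_bigr => f _.
    by rewrite -scalemxAr mxE Hkf mxE eqxx mulr1n mulrA.
  have Ht : exists k : 'cV[R]_(p + 2), d1 *m k = tm.
    case: HJ4 => n [d0 [d [HJd [h0 [hd [_ [_ [E0 [E1 E2]]]]]]]]].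
    have : forall j : 'I_(n 0%N), exists kj : 'cV[R]_(p + 2),
        d1 *m kj = (d0 0 j * tm 0 0)%:M.
      move=> j; apply: JI; apply/HJd; exists (delta_mx j 0); by rewrite dr.
    case/fin_all_exists => kj Hkj.
    have x3 : forall v : 'cV[R]_(q - 1), d3 *m v = 0 ->
        exists w : 'cV[R]_0, v = (0 : 'M[R]_(q - 1, 0)) *m w.
      by move=> v /hex3 ->; exists 0; rewrite mulmx0.
    have x4 : forall v : 'cV[R]_0, (0 : 'M[R]_(q - 1, 0)) *m v = 0 -> v = 0.
      by move=> v _; apply/matrixP => -[].
    have E4 : forall Y : 'M[R]_(0, n 3%N), Y *m d 3%N = 0 ->
        exists X : 'M[R]_(0, n 2%N), Y = X *m d 2%N.
      by move=> Y _; exists 0; apply/matrixP => -[].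
    have HW0 : tm *m d0 = d1 *m (\matrix_(i, j) kj j i 0).
      apply/matrixP => a j; rewrite !ord1 !mxE big_ord1.
      transitivity ((d1 *m kj j) 0 0); last first.
        by rewrite !mxE; apply: eq_bigr => i _; rewrite !mxE.
      by rewrite Hkj [RHS]mxE eqxx mulr1n mulrC !ord1.
    have [X HX] := @chase4 R 1 (p + 2) (p + q) (q - 1) 0 d1 d2 d3
      (0 : 'M[R]_(q - 1, 0)) hd12 hd23 (mulmx0 _ _) hex1 hex2 x3 x4 n d0 d
      (E0 isT) (E1 isT) (E2 0%N isT) (E2 1%N isT) E4 h0 hd tm _ HW0.
    by exists X.
  case: Ht => k Hk.
  pose psi' := psi - Gm^T *m k.
  have Hp : psi'^T *m d3 = 0.
    rewrite /psi' raddfB /= trmx_mul trmxK mulmxBl -/u Hud3 -(mulmxA k^T) K1.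
    by rewrite mulmxA -trmx_mul Hk tr11 subrr.
  have [y Hy] := hdex2 _ Hp.
  exists y^T, k.
  have : psi' = d2^T *m y^T by rewrite -[psi']trmxK Hy trmx_mul.
  by rewrite /psi' => /eqP; rewrite subr_eq => /eqP ->; rewrite addrC.
split.
  split.
    move=> c; rewrite D3 /delta4 /= (mulmxA Gm) GM0 mul0mx (mulmxA d2) d2M0 mul0mx.
    by [].
  split; first by move=> f; rewrite D3 /= D2 K2.
  split.
    move=> phi e; rewrite D2 D1 mulmxDr !mulmxA -!trmx_mul.
    by rewrite d2M0 GM0 !trmx0 !mul0mx addr0.
  split; first by move=> c; exact: X4.
  split; first by move=> f; rewrite D3 => -[Hg Hd]; exact: X3.
  split.
    move=> phi e; rewrite D2 => /X2 [f [H1 H2]]; exists f; by rewrite D3 H1 H2.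
  by move=> psi; rewrite D1 => /X1 [phi [e ->]]; exists phi, e; rewrite D2.
case: (classic (grade_ge J 5)) => H5; last by right.
left.
case: H5 => n [d0 [d [HJd [h0 [hd [_ [_ [E0 [E1 E2]]]]]]]]].
have c1 : (d3 *m iota)^T *m row_mx d2^T Gm^T = 0.
  by rewrite mul_mx_row -!trmx_mul d2M0 GM0 !trmx0 row_mx0.
have c2 : row_mx d2^T Gm^T *m col_mx Gm d2 = 0.
  rewrite mul_row_col; apply: col_matrixP' => j.
  by rewrite col0 colE mulmxDl -!mulmxA K2.
have c3 : col_mx Gm d2 *m (d3 *m iota) = 0.
  by rewrite mul_col_mx GM0 d2M0 col_mx0.
have y1 : forall v : 'cV[R]_(p + q), (d3 *m iota)^T *m v = 0 ->
    exists w : 'cV[R]_(p + 2 + (p + 2)), v = row_mx d2^T Gm^T *m w.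
  by move=> v /X1 [phi [e ->]]; exists (col_mx phi e); rewrite mul_row_col.
have y2 : forall w : 'cV[R]_(p + 2 + (p + 2)), row_mx d2^T Gm^T *m w = 0 ->
    exists f : 'cV[R]_(p + q), w = col_mx Gm d2 *m f.
  move=> w; rewrite -[w]vsubmxK mul_row_col => /X2 [f [H1 H2]].
  by exists f; rewrite mul_col_mx H1 H2.
have y3 : forall f : 'cV[R]_(p + q), col_mx Gm d2 *m f = 0 ->
    exists c : 'cV[R]_(q - 2), f = d3 *m iota *m c.
  by move=> f; rewrite mul_col_mx -(col_mx0 _ (p + 2)) => /eq_col_mx [H1 H2]; exact: X3.
have E4 : forall Y : 'M[R]_(q - 2, n 3%N), Y *m d 3%N = 0 ->
    exists X : 'M[R]_(q - 2, n 2%N), Y = X *m d 2%N.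
  by move=> Y HY; exact: (lift_rows (E2 2%N isT)) HY.
have JN : forall x, J x -> forall t : 'cV[R]_(q - 2),
    exists w : 'cV[R]_(p + q), x *: t = (d3 *m iota)^T *m w.
  move=> x; rewrite /J /minors_ideal => -[c ->] t.
  have Wf : forall f : {ffun 'I_(q - 2) -> 'I_(p + q)},
      (d3 *m iota)^T *m ((rowsub f (1%:M : 'M[R]_(p + q)))^T *m
         (\adj (rowsub f (d3 *m iota)))^T *m t)
      = \det (rowsub f (d3 *m iota)) *: t.
    move=> f; rewrite !mulmxA -trmx_mul -rowsubE -trmx_mul mul_adj_mx.
    by rewrite tr_scalar_mx mul_scalar_mx.
  exists (\sum_f c f *: ((rowsub f (1%:M : 'M[R]_(p + q)))^T *m
         (\adj (rowsub f (d3 *m iota)))^T *m t)).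
  rewrite mulmx_sumr scaler_suml; apply: eq_bigr => f _.
  by rewrite -scalemxAr Wf scalerA.
have Hcol : forall j : 'I_(q - 2), exists w : 'cV[R]_(p + q),
    (delta_mx j 0 : 'cV[R]_(q - 2)) = (d3 *m iota)^T *m w.
  move=> j.
  have : forall l : 'I_(n 0%N), exists wl : 'cV[R]_(p + q),
      d0 0 l *: (delta_mx j 0 : 'cV[R]_(q - 2)) = (d3 *m iota)^T *m wl.
    move=> l; apply: JN; apply/HJd; exists (delta_mx l 0); by rewrite dr.
  case/fin_all_exists => wl Hwl.
  have HW0 : (delta_mx j 0 : 'cV[R]_(q - 2)) *m d0
      = (d3 *m iota)^T *m (\matrix_(i, l) wl l i 0).
    apply: col_matrixP' => l.
    rewrite !col_mulmx.
    have -> : col l d0 = (d0 0 l)%:M by apply/matrixP => a b; rewrite !ord1 !mxE.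
    rewrite mul_mx_scalar Hwl; congr (_ *m _); apply/matrixP => a b.
    by rewrite !ord1 !mxE.
  have [X HX] := @chase4 R (q - 2) (p + q) (p + 2 + (p + 2)) (p + q) (q - 2)
    _ _ _ _ c1 c2 c3 y1 y2 y3 X4 n d0 d
    (E0 isT) (E1 isT) (E2 0%N isT) (E2 1%N isT) E4 h0 hd _ _ HW0.
  by exists X.
case/fin_all_exists: Hcol => w Hw.
pose X := \matrix_(i, j) w j i 0.
have H1 : (1%:M : 'M[R]_(q - 2)) = (d3 *m iota)^T *m X.
  apply: col_matrixP' => j; rewrite col_mulmx colE mul1mx Hw; congr (_ *m _).
  by apply/matrixP => a b; rewrite !ord1 !mxE.
have J1 : J 1.
  exists (fun f => \prod_i X^T i (f i)).
  by rewrite -cauchy_binet -det_tr trmx_mul trmxK -H1 det1.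
move=> x; case: J1 => c Hc; exists (fun f => x * c f).
by rewrite -[LHS]mulr1 {1}Hc big_distrr /=; apply: eq_bigr => f _; rewrite mulrA.
Qed.
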